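(* Let $k$ be a field of characteristic $0$, $R=k[x_1,\dots,x_n]$, $\ell=x_1+\dots+x_n$, let $d_1,\dots,d_n$ be positive integers such that $I=(x_1^{d_1},\dots,x_{n-1}^{d_{n-1}},x_n^2,\ell^{d_n})$ is minimally generated by these elements, and let $(a_1,\dots,a_{n+1})\in R^{n+1}$ satisfy $a_1x_1^{d_1}+\dots+a_{n-1}x_{n-1}^{d_{n-1}}+a_nx_n^2+a_{n+1}\ell^{d_n}=0$. If $\sum_{i=1}^n(d_i-1)$ is odd, then $$c_1a_1x_1^{d_1-2}+\dots+c_{n-1}a_{n-1}x_{n-1}^{d_{n-1}-2}+a_n+c_na_{n+1}\ell^{d_n-2}\in I,$$ where $c_i=\sum_{j=0}^{\lfloor (d_i-1)/2\rfloor}(d_i-1-2j)^2$. In particular, when $n$ is odd, every relation $(a_1,\dots,a_{n+1})$ of $(x_1^2,\dots,x_n^2,\ell^2)$ (i.e. $\sum_{i=1}^n a_ix_i^2+a_{n+1}\ell^2=0$) satisfies $a_1+\dots+a_{n+1}\in(x_1^2,\dots,x_n^2,\ell^2)$.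
   Context: When $c_i=0$ the corresponding term (which may involve a negative exponent formally) is zero. *)

(* Defs.v *)
From HB Require Import structures.
From mathcomp Require Import all_boot all_order all_algebra.
From mathcomp Require Import mpoly.
Set Implicit Arguments. Unset Strict Implicit. Unset Printing Implicit Defensive.
Import Order.TTheory GRing.Theory.
Local Open Scope ring_scope.

Definition in_ideal (R : comRingType) (I : finType) (g : I -> R) (p : R) : Prop :=
  exists b : I -> R, p = \sum_(i : I) b i * g i.

Definition minimal_gens (R : comRingType) (I : finType) (g : I -> R) : Prop :=
  forall i : I, ~ (exists b : I -> R, g i = \sum_(j : I | j != i) b j * g j).

Definition is_relation (R : comRingType) (I : finType) (g : I -> R) (a : I -> R) : Prop :=
  \sum_(i : I) a i * g i = 0.

Definition ell (k : fieldType) (n : nat) : {mpoly k[n]} := \sum_(i < n) 'X_i.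

(* Variables are 0-based: 'X_i, i : 'I_n, paper's x_{i+1}; d : nat -> nat with
   d j = paper's d_{j+1}.  Index Some i <-> the i-th variable's generator,
   None <-> ell^{d_n}. *)
Definition gens (k : fieldType) (n : nat) (d : nat -> nat) (o : option 'I_n)
  : {mpoly k[n]} :=
  match o with
  | Some i => if val i == n.-1 then 'X_i ^+ 2 else 'X_i ^+ d (val i)
  | None => ell k n ^+ d n.-1
  end.

Definition cc (m : nat) : nat := (\sum_(j < ((m - 1)./2).+1) (m - 1 - 2 * j) ^ 2)%N.

(* c_1 a_1 x_1^{d_1-2} + ... + c_{n-1} a_{n-1} x_{n-1}^{d_{n-1}-2} + a_n
   + c_n a_{n+1} ell^{d_n-2}.  (When d_i = 1, c_i = 0 and the term is 0.) *)
Definition combo (k : fieldType) (n : nat) (d : nat -> nat)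
  (a : option 'I_n -> {mpoly k[n]}) : {mpoly k[n]} :=
  \sum_(i < n) (if val i == n.-1 then a (Some i)
                else (cc (d i))%:R * a (Some i) * 'X_i ^+ (d i - 2))
  + (cc (d n.-1))%:R * a None * ell k n ^+ (d n.-1 - 2).

(* Main.v *)
Require Import Defs.
From HB Require Import structures.
From mathcomp Require Import all_boot all_order all_algebra.
From mathcomp Require Import mpoly.
From mathcomp Require Import ring zify.
Set Implicit Arguments. Unset Strict Implicit. Unset Printing Implicit Defensive.
Import Order.TTheory GRing.Theory.
Local Open Scope ring_scope.

Section Ops.
Variable (k : fieldType) (n : nat) (del : 'I_n -> nat).
Local Notation R := {mpoly k[n]}.

Lemma mderiv_X (i j : 'I_n) : mderiv i ('X_j : R) = (j == i)%:R.
Proof.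
rewrite mderivX mnm1E; case: eqP => [->|_]; last by rewrite scale0r.
have ->: (U_(i) - U_(i))%MM = 0%MM by apply/mnmP => l; rewrite mnmBE subnn mnm0E.
by rewrite mpolyX0 scale1r.
Qed.

Lemma dXp (i j : 'I_n) (p : R) : mderiv i ('X_j * p) = (j == i)%:R * p + 'X_j * mderiv i p.
Proof. by rewrite mderivM mderiv_X. Qed.

Lemma dN (i : 'I_n) (m : nat) (p : R) : mderiv i (m%:R * p) = m%:R * mderiv i p.
Proof. by rewrite !mulr_natl mderivMn. Qed.

Definition fop i (p : R) := (del i).-1%:R * mderiv i p - 'X_i * mderiv i (mderiv i p).
Definition Fo (p : R) := \sum_(i < n) fop i p.
Definition Eo (p : R) := \sum_(i < n) 'X_i * mderiv i p.
Definition gop i (p : R) := 3%:R * (del i).-1%:R * mderiv i (mderiv i p)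
   - 2%:R * 'X_i * mderiv i (mderiv i (mderiv i p)).
Definition Go (p : R) := \sum_(i < n) gop i p.
Definition sN := (\sum_(i < n) (del i).-1)%N.
Definition Lf : R := \sum_(i < n) 'X_i.

Lemma Fo_lin : linear Fo.
Proof.
move=> c p q; rewrite /Fo scaler_sumr -big_split; apply: eq_bigr => i _.
rewrite /fop !linearP /= -!mul_mpolyC; ring.
Qed.
HB.instance Definition _ := GRing.isLinear.Build k R R _ Fo Fo_lin.

Lemma Eo_lin : linear Eo.
Proof.
move=> c p q; rewrite /Eo scaler_sumr -big_split; apply: eq_bigr => i _.
rewrite !linearP /= -!mul_mpolyC; ring.
Qed.
HB.instance Definition _ := GRing.isLinear.Build k R R _ Eo Eo_lin.

Lemma Go_lin : linear Go.
Proof.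
move=> c p q; rewrite /Go scaler_sumr -big_split; apply: eq_bigr => i _.
rewrite /gop !linearP /= -!mul_mpolyC; ring.
Qed.
HB.instance Definition _ := GRing.isLinear.Build k R R _ Go Go_lin.

Lemma opN (f : {linear R -> R}) (m : nat) p : f (m%:R * p) = m%:R * f p.
Proof. by rewrite !mulr_natl raddfMn. Qed.

Lemma FoD p q : Fo (p + q) = Fo p + Fo q. Proof. exact: raddfD. Qed.
Lemma FoB p q : Fo (p - q) = Fo p - Fo q. Proof. exact: raddfB. Qed.
Lemma FoNeg p : Fo (- p) = - Fo p. Proof. exact: raddfN. Qed.
Lemma Fon (m : nat) p : Fo (m%:R * p) = m%:R * Fo p. Proof. exact: opN. Qed.
Lemma Fo_sum (F : 'I_n -> R) : Fo (\sum_(i < n) F i) = \sum_(i < n) Fo (F i). Proof. exact: raddf_sum. Qed.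
Lemma EoD p q : Eo (p + q) = Eo p + Eo q. Proof. exact: raddfD. Qed.
Lemma EoB p q : Eo (p - q) = Eo p - Eo q. Proof. exact: raddfB. Qed.
Lemma EoNeg p : Eo (- p) = - Eo p. Proof. exact: raddfN. Qed.
Lemma Eon (m : nat) p : Eo (m%:R * p) = m%:R * Eo p. Proof. exact: opN. Qed.
Lemma Eo_sum (F : 'I_n -> R) : Eo (\sum_(i < n) F i) = \sum_(i < n) Eo (F i). Proof. exact: raddf_sum. Qed.
Lemma GoD p q : Go (p + q) = Go p + Go q. Proof. exact: raddfD. Qed.
Lemma GoB p q : Go (p - q) = Go p - Go q. Proof. exact: raddfB. Qed.
Lemma GoNeg p : Go (- p) = - Go p. Proof. exact: raddfN. Qed.
Lemma Gon (m : nat) p : Go (m%:R * p) = m%:R * Go p. Proof. exact: opN. Qed.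
Lemma Go_sum (F : 'I_n -> R) : Go (\sum_(i < n) F i) = \sum_(i < n) Go (F i). Proof. exact: raddf_sum. Qed.
Lemma sum_ind (T : R) (j : 'I_n) (F : 'I_n -> R) :
  \sum_(i < n) (i == j)%:R * F i = F j.
Proof.
rewrite (bigD1 j) //= eqxx mul1r big1 ?addr0 // => i /negPf ->; by rewrite mul0r.
Qed.

Lemma sum_ind' (j : 'I_n) (F : 'I_n -> R) :
  \sum_(i < n) (j == i)%:R * F i = F j.
Proof.
rewrite (bigD1 j) //= eqxx mul1r big1 ?addr0 // => i; rewrite eq_sym => /negPf ->; by rewrite mul0r.
Qed.

Lemma fop_X i j p : fop i ('X_j * p) = 'X_j * fop i p
   + (j == i)%:R * ((del i).-1%:R * p - 2%:R * 'X_i * mderiv i p).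
Proof. rewrite /fop !(dXp, mderivD, dN); ring. Qed.

Lemma gop_X i j p : gop i ('X_j * p) = 'X_j * gop i p + (j == i)%:R * (6%:R * fop i p).
Proof. rewrite /gop /fop !(dXp, mderivD, dN); ring. Qed.

Lemma Eo_X j p : Eo ('X_j * p) = 'X_j * Eo p + 'X_j * p.
Proof.
rewrite /Eo (eq_bigr (fun i => 'X_j * ('X_i * mderiv i p) + (j == i)%:R * ('X_i * p))).
  by rewrite big_split /= sum_ind' -mulr_sumr addrC.
move=> i _; rewrite dXp; case: eqP => [->|_]; ring.
Qed.

Lemma Fo_X j p : Fo ('X_j * p) = 'X_j * Fo p + ((del j).-1%:R * p - 2%:R * 'X_j * mderiv j p).
Proof.
rewrite /Fo (eq_bigr _ (fun i _ => fop_X i j p)) big_split /= -mulr_sumr.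
congr (_ + _); rewrite (bigD1 j) //= eqxx mul1r big1 ?addr0 // => i.
by rewrite eq_sym => /negPf ->; rewrite mul0r.
Qed.

Lemma Go_X j p : Go ('X_j * p) = 'X_j * Go p + 6%:R * fop j p.
Proof.
rewrite /Go (eq_bigr _ (fun i _ => gop_X i j p)) big_split /= -mulr_sumr.
congr (_ + _); rewrite (bigD1 j) //= eqxx mul1r big1 ?addr0 // => i.
by rewrite eq_sym => /negPf ->; rewrite mul0r.
Qed.

Lemma Fo_L p : Fo (Lf * p) = Lf * Fo p + sN%:R * p - 2%:R * Eo p.
Proof.
rewrite /Lf mulr_suml raddf_sum /= (eq_bigr _ (fun j _ => Fo_X j p)) big_split /=.
rewrite -mulr_suml -addrA; congr (_ + _).
rewrite sumrB /sN natr_sum mulr_suml /Eo mulr_sumr; congr (_ - _).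
by apply: eq_bigr => i _; ring.
Qed.

Lemma Eo_L p : Eo (Lf * p) = Lf * Eo p + Lf * p.
Proof.
rewrite /Lf !mulr_suml raddf_sum /= (eq_bigr _ (fun j _ => Eo_X j p)) big_split /=.
by rewrite -mulr_suml.
Qed.

Lemma Go_L p : Go (Lf * p) = Lf * Go p + 6%:R * Fo p.
Proof.
have ->: Lf * p = \sum_(j < n) 'X_j * p by rewrite /Lf mulr_suml.
rewrite raddf_sum /= (eq_bigr _ (fun j _ => Go_X j p)) big_split /=.
rewrite -mulr_suml; congr (_ + _); by rewrite /Fo mulr_sumr.
Qed.

Lemma dE i p : mderiv i (Eo p) = mderiv i p + Eo (mderiv i p).
Proof.
rewrite /Eo raddf_sum /= (eq_bigr _ (fun j _ => dXp i j (mderiv j p))) big_split /=.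
congr (_ + _); first by rewrite (bigD1 i) //= eqxx mul1r big1 ?addr0 // => j /negPf ->; rewrite mul0r.
by apply: eq_bigr => j _; rewrite mderiv_comm.
Qed.

Lemma Eo_d i q : Eo (mderiv i q) = mderiv i (Eo q) - mderiv i q.
Proof. by rewrite dE addrC addKr. Qed.

Lemma Eo_fop i p : Eo (fop i p) = fop i (Eo p) - fop i p.
Proof.
rewrite /fop EoB Eon Eo_X !Eo_d !mderivB; ring.
Qed.

Lemma Eo_Fo p : Eo (Fo p) = Fo (Eo p) - Fo p.
Proof. by rewrite /Fo Eo_sum (eq_bigr _ (fun i _ => Eo_fop i p)) sumrB. Qed.

Lemma Eo_Lk m p : Eo (Lf ^+ m * p) = Lf ^+ m * Eo p + m%:R * (Lf ^+ m * p).
Proof.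
elim: m => [|m IH]; first by rewrite expr0 !mul1r mul0r addr0.
rewrite exprS -mulrA Eo_L IH; ring.
Qed.

Lemma Fo_Lk m p : Fo (Lf ^+ m.+1 * p) = Lf ^+ m.+1 * Fo p
   + m.+1%:R * (Lf ^+ m * (sN%:R * p - m%:R * p - 2%:R * Eo p)).
Proof.
elim: m => [|m IH]; first by rewrite expr1 expr0 Fo_L; ring.
rewrite exprS -mulrA Fo_L IH Eo_Lk !exprS; ring.
Qed.

Lemma Go_Lk m p : Go (Lf ^+ m.+2 * p) = Lf ^+ m.+2 * Go p
   + 6%:R * m.+2%:R * (Lf ^+ m.+1 * Fo p)
   + m.+2%:R * m.+1%:R * (Lf ^+ m * (3%:R * sN%:R * p - 6%:R * Eo p - 2%:R * m%:R * p)).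
Proof.
elim: m => [|m IH].
  rewrite exprS -mulrA Go_L expr1 Go_L Fo_L; ring.
rewrite exprS -mulrA Go_L IH Fo_Lk !exprS; ring.
Qed.

Lemma ell_part m (b' b : R) :
  b = sN%:R * b' + 2%:R * b' - m.+2%:R * b' - 2%:R * Eo b' ->
  (m.+3 * m.+2 * m.+1)%:R * (Lf ^+ m * b) =
  Go (Lf ^+ m.+2 * b) - Lf ^+ m.+2 * Go b
  - 3%:R * Fo (Fo (Lf ^+ m.+2 * b')) + 3%:R * (Lf ^+ m.+2 * Fo (Fo b')).
Proof.
move=> ->; rewrite Go_Lk.
rewrite !(FoD, FoB, FoNeg, Fon, Fo_Lk, EoD, EoB, EoNeg, Eon, GoD, GoB, GoNeg, Gon, Eo_Fo).
rewrite !exprS; ring.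
Qed.

Lemma ell_part1 (b' b : R) :
  b = sN%:R * b' + 2%:R * b' - 1%:R * b' - 2%:R * Eo b' ->
  0 = Go (Lf * b) - Lf * Go b - 3%:R * Fo (Fo (Lf * b')) + 3%:R * (Lf * Fo (Fo b')).
Proof.
move=> ->; rewrite Go_L.
rewrite !(FoD, FoB, FoNeg, Fon, Fo_L, EoD, EoB, EoNeg, Eon, GoD, GoB, GoNeg, Gon, Eo_Fo).
ring.
Qed.

Lemma dNat i (m : nat) : mderiv i (m%:R : R) = 0.
Proof. by rewrite -mpolyC_nat mderivC. Qed.

Lemma d1 i : mderiv i (1 : R) = 0.
Proof. by have := dNat i 1; rewrite mulr1n. Qed.

Lemma dXn_same i m : mderiv i (('X_i : R) ^+ m.+1) = m.+1%:R * 'X_i ^+ m.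
Proof.
elim: m => [|m IH]; first by rewrite expr1 mderiv_X eqxx expr0 mulr1.
by rewrite exprS dXp IH eqxx /= !exprS; ring.
Qed.

Lemma dXn0 i j m : j != i -> mderiv i (('X_j : R) ^+ m) = 0.
Proof.
move=> /negPf ji; elim: m => [|m IH]; first by rewrite expr0 d1.
by rewrite exprS dXp IH ji mul0r mulr0 addr0.
Qed.

Lemma dXn' i m : mderiv i (('X_i : R) ^+ m) = m%:R * 'X_i ^+ m.-1.
Proof. by case: m => [|m]; rewrite ?dXn_same // expr0 d1 mul0r. Qed.

Lemma X_dXn i m : 'X_i * mderiv i (('X_i : R) ^+ m) = m%:R * 'X_i ^+ m.
Proof. by rewrite dXn'; case: m => [|m] /=; rewrite ?mul0r ?mulr0 // exprS; ring. Qed.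

Lemma X_ddXn i m : 'X_i * mderiv i (mderiv i (('X_i : R) ^+ m))
   = (m%:R - 1) * mderiv i ('X_i ^+ m).
Proof.
have := congr1 (mderiv i) (X_dXn i m); rewrite dXp eqxx dN /= => h.
have h' : 'X_i * mderiv i (mderiv i (('X_i : R) ^+ m)) =
   m%:R * mderiv i ('X_i ^+ m) - mderiv i ('X_i ^+ m).
  by rewrite -h; ring.
by rewrite h'; ring.
Qed.

Lemma d_cross i j (a : R) m : j != i ->
  mderiv i (a * 'X_j ^+ m) = mderiv i a * 'X_j ^+ m.
Proof. by move=> ji; rewrite mderivM dXn0 // mulr0 addr0. Qed.

Lemma gop_cross i j (a : R) m : j != i ->
  gop i (a * 'X_j ^+ m) = gop i a * 'X_j ^+ m.
Proof. move=> ji; rewrite /gop !d_cross //; ring. Qed.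

Lemma fop_cross i j (a : R) m : j != i ->
  fop i (a * 'X_j ^+ m) = fop i a * 'X_j ^+ m.
Proof. move=> ji; rewrite /fop !d_cross //; ring. Qed.

Lemma fop_same i (a : R) m : del i = m.+1 ->
  fop i (a * 'X_i ^+ m.+1) = (fop i a - 2%:R * m.+1%:R * mderiv i a) * 'X_i ^+ m.+1.
Proof.
move=> hd; rewrite /fop hd /=.
rewrite !(mderivM, mderivD, dN, dXn_same, dNat) !(mul0r, add0r).
have e1 := X_dXn i m.
apply: subr0_eq.
transitivity (- m.+1%:R * a * ('X_i * mderiv i ('X_i ^+ m) - m%:R * 'X_i ^+ m)).
  rewrite !exprS; ring.
by rewrite e1 subrr mulr0.
Qed.

Lemma gop_same i (a : R) m : del i = m.+1 ->
  gop i (a * 'X_i ^+ m.+1) = (m.+2 * m.+1)%:R * a * mderiv i ('X_i ^+ m)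
   + (gop i a - 6%:R * m.+1%:R * mderiv i (mderiv i a)) * 'X_i ^+ m.+1.
Proof.
move=> hd; rewrite /gop hd /=.
rewrite !(mderivM, mderivD, dN, dXn_same, dNat) !(mul0r, add0r).
have e1 := X_dXn i m; have e2 := X_ddXn i m.
apply: subr0_eq.
transitivity (- 6%:R * m.+1%:R * mderiv i a * ('X_i * mderiv i ('X_i ^+ m) - m%:R * 'X_i ^+ m)
  - 2%:R * m.+1%:R * a * ('X_i * mderiv i (mderiv i ('X_i ^+ m)) - (m%:R - 1) * mderiv i ('X_i ^+ m))).
  rewrite !exprS; ring.
by rewrite e1 e2 !subrr !mulr0 subrr.
Qed.

Lemma Fo_gen i (a : R) m : del i = m.+1 ->
  Fo (a * 'X_i ^+ m.+1) = (Fo a - 2%:R * m.+1%:R * mderiv i a) * 'X_i ^+ m.+1.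
Proof.
move=> hd; rewrite /Fo (bigD1 i) //= fop_same // [in RHS](bigD1 i) //=.
rewrite (eq_bigr (fun j => fop j a * 'X_i ^+ m.+1)); last first.
  by move=> j ji; rewrite fop_cross // eq_sym.
rewrite -mulr_suml; ring.
Qed.

Lemma Go_gen i (a : R) m : del i = m.+1 ->
  Go (a * 'X_i ^+ m.+1) = (m.+2 * m.+1)%:R * a * mderiv i ('X_i ^+ m)
   + (Go a - 6%:R * m.+1%:R * mderiv i (mderiv i a)) * 'X_i ^+ m.+1.
Proof.
move=> hd; rewrite /Go (bigD1 i) //= gop_same // [in RHS](bigD1 i) //=.
rewrite (eq_bigr (fun j => gop j a * 'X_i ^+ m.+1)); last first.
  by move=> j ji; rewrite gop_cross // eq_sym.
rewrite -mulr_suml; ring.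
Qed.

End Ops.

Section Dsec.
Variable (k : fieldType) (n : nat).
Local Notation R := {mpoly k[n]}.

Definition Dop (t : k) (p : R) : R :=
  \sum_(m <- msupp p) (p@_m / (t - 2%:R * (mdeg m)%:R)) *: 'X_[m].

Lemma Dcoef t p m : (Dop t p)@_m = p@_m / (t - 2%:R * (mdeg m)%:R).
Proof.
rewrite /Dop raddf_sum /=.
rewrite (eq_bigr (fun m' => if m' == m then p@_m' / (t - 2%:R * (mdeg m')%:R) else 0)); last first.
  by move=> m' _; rewrite mcoeffZ mcoeffX; case: eqP => _; rewrite ?mulr1 ?mulr0.
case: (boolP (m \in msupp p)) => hm.
  rewrite (big_rem m hm) /= eqxx big1_seq ?addr0 // => m' /andP[_ hm'].
  case: eqP hm' => // ->; by rewrite mem_rem_uniqF ?msupp_uniq.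
rewrite big1_seq; last by move=> m' /andP[_ hm']; case: eqP hm' => // ->; rewrite (negPf hm).
by rewrite (memN_msupp_eq0 hm) mul0r.
Qed.

Lemma Dop_lin t : linear (Dop t).
Proof.
move=> c p q; apply/mpolyP => m.
by rewrite mcoeffD mcoeffZ !Dcoef mcoeffD mcoeffZ mulrDl mulrA.
Qed.
HB.instance Definition _ t := GRing.isLinear.Build k R R _ (Dop t) (Dop_lin t).

Lemma Dop_sum t (F : 'I_n -> R) : Dop t (\sum_(i < n) F i) = \sum_(i < n) Dop t (F i).
Proof. exact: raddf_sum. Qed.

Lemma Eo_mono (m : 'X_{1..n}) : Eo ('X_[m] : R) = (mdeg m)%:R *: 'X_[m].
Proof.
rewrite /Eo (eq_bigr (fun i => (m i)%:R *: ('X_[m] : R))).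
  by rewrite -scaler_suml -natr_sum mdegE.
move=> i _; rewrite mderivX -scalerAr.
have [->|nz] := eqVneq (m i) 0%N; first by rewrite !scale0r.
congr (_ *: _); rewrite -mpolyXD addmC submK //.
by rewrite lep1mP.
Qed.

Lemma D_inv t p : (forall m : 'X_{1..n}, t - 2%:R * (mdeg m)%:R != 0) ->
  t *: Dop t p - 2%:R *: Eo (Dop t p) = p.
Proof.
move=> hnz.
have Es : forall (r : seq 'X_{1..n}) (F : 'X_{1..n} -> R),
  Eo (\sum_(m <- r) F m) = \sum_(m <- r) Eo (F m) by move=> r F; exact: raddf_sum.
rewrite {3}[p]mpolyE /Dop Es.
rewrite !scaler_sumr -sumrB; apply: eq_bigr => m _.
have EZ : forall (c : k) (q : R), Eo (c *: q) = c *: Eo q by move=> c q; exact: linearZ.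
rewrite EZ Eo_mono !scalerA -scalerBl; congr (_ *: _).
have := hnz m; set den := t - _ => hd.
rewrite /den in hd *; field; exact: hd.
Qed.

Definition hom (d : nat) (g : R) := forall m, g@_m != 0 -> mdeg m = d.

Lemma hom_Xn i e : hom e ('X_i ^+ e).
Proof.
move=> m; rewrite mpolyXn mcoeffX.
have [<- _|ne] := eqVneq (U_(i) *+ e)%MM m; first by rewrite mdegMn mdeg1 mul1n.
by rewrite /= mulr0n eqxx.
Qed.

Lemma hom_mul d1 d2 p q : hom d1 p -> hom d2 q -> hom (d1 + d2) (p * q).
Proof.
move=> hp hq m; apply: contraTeq => hne; rewrite negbK; apply/eqP.
rewrite mcoeffM big1 // => kk /eqP hm.
have [h1|h1] := eqVneq p@_kk.1 0; first by rewrite h1 mul0r.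
have [h2|h2] := eqVneq q@_kk.2 0; first by rewrite h2 mulr0.
have hmd : mdeg m = (d1 + d2)%N by rewrite {1}hm mdegD (hp _ h1) (hq _ h2).
by rewrite hmd eqxx in hne.
Qed.

Lemma hom_1 : hom 0 1.
Proof.
move=> m; rewrite mcoeff1; have [-> _|ne] := eqVneq m 0%MM; first by rewrite mdeg0.
by rewrite /= mulr0n eqxx.
Qed.

Lemma hom_exp d p e : hom d p -> hom (d * e) (p ^+ e).
Proof.
move=> hp; elim: e => [|e IH]; first by rewrite muln0 expr0; exact: hom_1.
by rewrite exprS mulnS; apply: hom_mul.
Qed.

Lemma hom_L : hom 1 (\sum_(i < n) 'X_i).
Proof.
move=> m; apply: contraTeq => hne; rewrite negbK; apply/eqP.
rewrite raddf_sum big1 //= => i _.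
rewrite mcoeffX; have [hm|ne] := eqVneq U_(i)%MM m; last by rewrite /= mulr0n.
by move: hne; rewrite -hm mdeg1.
Qed.

Lemma D_hom t d p g : hom d g -> Dop t (p * g) = Dop (t - 2%:R * d%:R) p * g.
Proof.
move=> hg; apply/mpolyP => q; rewrite Dcoef !mcoeffM mulr_suml.
apply: eq_bigr => kk /eqP hq; rewrite Dcoef.
have [h2|h2] := eqVneq g@_kk.2 0; first by rewrite h2 !mulr0 mul0r.
have -> : t - 2%:R * d%:R - 2%:R * (mdeg kk.1)%:R = t - 2%:R * (mdeg q)%:R.
  have hq' : mdeg q = (mdeg kk.1 + d)%N by rewrite {1}hq mdegD (hg _ h2).
  have key : forall a b : nat, a = (b + d)%N ->
    t - 2%:R * d%:R - 2%:R * b%:R = t - 2%:R * a%:R by move=> a b ->; rewrite natrD; ring.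
  exact: key.
by rewrite mulrAC.
Qed.

End Dsec.

Lemma cc_rec m : cc m.+3 = (cc m.+1 + m.+2 ^ 2)%N.
Proof.
rewrite /cc !subSS !subn0 /= big_ord_recl /= muln0 subn0 addnC; congr (_ + _)%N.
apply: eq_bigr => j _; congr (_ ^ 2)%N; rewrite /bump /=; lia.
Qed.

Lemma ccQ m : (6 * cc m.+1 = m.+2 * m.+1 * m)%N.
Proof.
elim: m {-2}m (leqnn m) => [|N IH] m hm.
  by move: hm; rewrite leqn0 => /eqP ->; rewrite /cc big_ord_recl big_ord0.
case: m hm => [|[|m]] hm.
- by rewrite /cc big_ord_recl big_ord0.
- by rewrite /cc !big_ord_recl big_ord0.
rewrite cc_rec mulnDr IH; last by lia.
ring.
Qed.



Section Main.
Variable (k : fieldType) (n : nat) (d : nat -> nat).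
Local Notation R := {mpoly k[n]}.

Definition deln (i : 'I_n) : nat := if val i == n.-1 then 2%N else d i.

Lemma gens_Some i : gens k d (Some i) = 'X_i ^+ deln i.
Proof. by rewrite /gens /deln; case: ifP. Qed.

Lemma sum_option (F : option 'I_n -> R) :
  \sum_(o : option 'I_n) F o = F None + \sum_(i < n) F (Some i).
Proof.
rewrite (bigD1 None) //=; congr (_ + _).
rewrite (reindex_omap Some id) //=; first by apply: eq_bigl => j; rewrite eqxx.
by case.
Qed.

Definition inJ (p : R) := exists w : 'I_n -> R, p = \sum_(i < n) w i * 'X_i ^+ deln i.
Definition inI (p : R) := in_ideal (gens k d) p.

Lemma inI_add p q : inI p -> inI q -> inI (p + q).
Proof.
case=> w1 ->; case=> w2 ->; exists (fun o => w1 o + w2 o).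
by rewrite -big_split; apply: eq_bigr => o _; rewrite mulrDl.
Qed.

Lemma inI_mull c p : inI p -> inI (c * p).
Proof.
case=> w ->; exists (fun o => c * w o).
by rewrite mulr_sumr; apply: eq_bigr => o _; rewrite mulrA.
Qed.

Lemma inI_neg p : inI p -> inI (- p).
Proof. by move=> h; rewrite -mulN1r; apply: inI_mull. Qed.

Lemma inJ_inI p : inJ p -> inI p.
Proof.
case=> w ->; exists (fun o => if o is Some i then w i else 0).
rewrite sum_option /= mul0r add0r; apply: eq_bigr => i _; rewrite /deln; by case: ifP.
Qed.

Lemma inI_L q : inI ((\sum_(i < n) 'X_i) ^+ d n.-1 * q).
Proof.
exists (fun o => if o is Some i then 0 else q).
rewrite sum_option /= [\sum_(i < n) 0 * _]big1 => [|i _]; last by rewrite mul0r.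
by rewrite addr0 mulrC.
Qed.

Lemma inJ_neg p : inJ p -> inJ (- p).
Proof.
case=> w ->; exists (fun i => - w i).
by rewrite -sumrN; apply: eq_bigr => i _; rewrite mulNr.
Qed.

Hypothesis hpos : forall i, (0 < deln i)%N.

Lemma Fo_J p : inJ p -> inJ (Fo deln p).
Proof.
case=> w ->; exists (fun i => Fo deln (w i) - 2%:R * (deln i)%:R * mderiv i (w i)).
rewrite Fo_sum; apply: eq_bigr => i _.
move: (hpos i); case E: (deln i) => [|m] // _.
by rewrite Fo_gen.
Qed.

Lemma D_J t p : inJ p -> inJ (Dop t p).
Proof.
case=> w ->; exists (fun i => Dop (t - 2%:R * (deln i)%:R) (w i)).
rewrite Dop_sum; apply: eq_bigr => i _.
by rewrite (D_hom _ _ (@hom_Xn _ _ i (deln i))).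
Qed.

Lemma x_comb i (a : R) :
  (6 * cc (deln i))%:R * (a * 'X_i ^+ (deln i - 2)) =
  Go deln (a * 'X_i ^+ deln i)
  - (Go deln a - 6%:R * (deln i)%:R * mderiv i (mderiv i a)) * 'X_i ^+ deln i.
Proof.
move: (hpos i); case E: (deln i) => [|m] // _.
rewrite Go_gen // dXn' ccQ !natrM.
have -> : (m.+1 - 2 = m.-1)%N by lia.
ring.
Qed.

End Main.

Lemma ell_comb (k : fieldType) (n : nat) (del : 'I_n -> nat) (e : nat) (b b' : {mpoly k[n]}) :
  (0 < e)%N ->
  b = (sN del)%:R * b' + 2%:R * b' - e%:R * b' - 2%:R * Eo b' ->
  (6 * cc e)%:R * (b * Lf k n ^+ (e - 2)) =
  Go del (b * Lf k n ^+ e) - Lf k n ^+ e * Go del b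
  - 3%:R * Fo del (Fo del (Lf k n ^+ e * b')) + 3%:R * (Lf k n ^+ e * Fo del (Fo del b')).
Proof.
case: e => [|[|m]] // _ hb.
  have h0 := ccQ 0; rewrite muln0 in h0; rewrite h0 mul0r expr1 (mulrC b).
  exact: (ell_part1 hb).
have -> : (m.+2 - 2 = m)%N by lia.
by rewrite ccQ (mulrC b) (mulrC b) (ell_part hb).
Qed.



Lemma natr_inj (k : fieldType) (chark : [pchar k] =i pred0) (x y : nat) :
  (x%:R == y%:R :> k) = (x == y).
Proof.
wlog le : x y / (y <= x)%N.
  move=> W; case: (leqP y x) => h; first exact: W.
  by rewrite eq_sym W ?(ltnW h) // eq_sym.
by rewrite -subr_eq0 -natrB // ((pcharf0P k).1 chark) subn_eq0 eqn_leq le andbT.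
Qed.

Lemma ar1 (x z : nat) : (0 < z)%N -> (1 + x + z = (z - 1 + x) + 2)%N.
Proof. lia. Qed.
Lemma ar2 (s e y : nat) : (s + 2 = e + 2 * y)%N -> (0 < e)%N -> (s + e = 2 * (e + y - 1))%N.
Proof. lia. Qed.

Lemma cc2 : cc 2%N = 1%N.
Proof. have := ccQ 1; lia. Qed.

Lemma part1 (k : fieldType) (chark : [pchar k] =i pred0)
  (n : nat) (n_gt0 : (0 < n)%N) (d : nat -> nat) (a : option 'I_n -> {mpoly k[n]}) :
  (forall j, (j < n)%N -> (0 < d j)%N) ->
  is_relation (@gens k n d) a ->
  odd (\sum_(j < n) (d j - 1)) ->
  in_ideal (@gens k n d) (@combo k n d a).
Proof.
move=> dpos hrel hodd.
have hpos : forall i : 'I_n, (0 < @deln n d i)%N.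
  by move=> i; rewrite /deln; case: ifP => // _; exact: dpos.
set del := @deln n d.
set e := d n.-1.
have hn1 : (n.-1 < n)%N by rewrite ltn_predL.
have epos : (0 < e)%N by exact: dpos.
set b := a None.
have hrel' : b * Lf k n ^+ e + \sum_(i < n) a (Some i) * 'X_i ^+ del i = 0.
  have E : \sum_(i < n) a (Some i) * gens k d (Some i) = \sum_(i < n) a (Some i) * 'X_i ^+ del i.
    by apply: eq_bigr => i _; rewrite gens_Some.
  by move: hrel; rewrite /is_relation sum_option E.
have hpar : odd (sN del + e).
  pose i0 : 'I_n := Ordinal hn1.
  have h1 : sN del = (1 + \sum_(i < n | i != i0) (d i).-1)%N.
    rewrite /sN (bigD1 i0) //=; congr (_ + _)%N.
      by rewrite /del /deln /= eqxx.
    apply: eq_bigr => i hi.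
    have hv : (val i == n.-1) = false.
      by apply/negbTE; apply: contra hi => /eqP h; apply/eqP/val_inj.
    by rewrite /del /deln hv.
  have h2 : (\sum_(j < n) (d j - 1) = (e - 1) + \sum_(i < n | i != i0) (d i).-1)%N.
    by rewrite (bigD1 i0) //=; congr (_ + _)%N; apply: eq_bigr => i _; rewrite subn1.
  have -> : (sN del + e = \sum_(j < n) (d j - 1) + 2)%N by rewrite h1 h2; exact: ar1.
  by rewrite addn2 /= negbK.
pose t : k := (sN del + 2)%:R - e%:R.
have hnz : forall m : 'X_{1..n}, t - 2%:R * (mdeg m)%:R != 0.
  move=> m; have -> : t - 2%:R * (mdeg m)%:R = (sN del + 2)%:R - (e + 2 * mdeg m)%N%:R.
    by rewrite /t !natrD; ring.
  rewrite subr_eq0 natr_inj //; apply/eqP => h.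
  move: hpar; have -> : (sN del + e = 2 * (e + mdeg m - 1))%N by exact: ar2.
  by rewrite oddM.
set b' := Dop t b.
have hb : b = (sN del)%:R * b' + 2%:R * b' - e%:R * b' - 2%:R * Eo b'.
  have hD := D_inv b hnz; rewrite -/b' in hD.
  rewrite -{1}hD /t -!mul_mpolyC rmorphB /= !mpolyC_nat natrD; ring.
have hL : hom (1 * e)%N (Lf k n ^+ e) := @hom_exp k n 1 (Lf k n) e (@hom_L k n).
have hJ : inJ d (Lf k n ^+ e * b').
  have hbL : inJ d (b * Lf k n ^+ e).
    have -> : b * Lf k n ^+ e = - \sum_(i < n) a (Some i) * 'X_i ^+ del i.
      by apply/eqP; rewrite -addr_eq0 hrel'.
    by apply: inJ_neg; exists (fun i => a (Some i)).
  have := @D_J k n d (t + 2%:R * (1 * e)%N%:R) _ hbL.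
  by rewrite (D_hom _ _ hL) addrK mulrC.
have hJ2 : inJ d (Fo del (Fo del (Lf k n ^+ e * b'))) := Fo_J hpos (Fo_J hpos hJ).
have hell := ell_comb epos hb.
have hcombo : @combo k n d a = \sum_(i < n) (cc (del i))%:R * (a (Some i) * 'X_i ^+ (del i - 2))
    + (cc e)%:R * (b * Lf k n ^+ (e - 2)).
  rewrite /combo; congr (_ + _); last by rewrite mulrA.
  apply: eq_bigr => i _; rewrite /del /deln; case: ifP => _; last by rewrite mulrA.
  by rewrite cc2 subnn expr0 mulr1 mul1r.
have hG : \sum_(i < n) Go del (a (Some i) * 'X_i ^+ del i) = - Go del (b * Lf k n ^+ e).
  rewrite -Go_sum -GoNeg; congr (Go _ _); apply/eqP; rewrite -addr_eq0 addrC hrel' //.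
have h6 : (6%:R : {mpoly k[n]}) * @combo k n d a =
   - \sum_(i < n) (Go del (a (Some i)) - 6%:R * (del i)%:R * mderiv i (mderiv i (a (Some i)))) * 'X_i ^+ del i
   - 3%:R * Fo del (Fo del (Lf k n ^+ e * b')) + Lf k n ^+ e * (3%:R * Fo del (Fo del b') - Go del b).
  rewrite hcombo mulrDr mulr_sumr.
  rewrite (eq_bigr (fun i => Go del (a (Some i) * 'X_i ^+ del i)
     - (Go del (a (Some i)) - 6%:R * (del i)%:R * mderiv i (mderiv i (a (Some i)))) * 'X_i ^+ del i)); last first.
    by move=> i _; rewrite mulrA -natrM; exact: (x_comb hpos).
  rewrite mulrA -natrM hell sumrB hG.
  move: (Lf k n ^+ e) (Go del (b * _)) (\sum_(i < n) _) (Fo del (Fo del _)) (Fo del (Fo del b')) (Go del b) => L1 G S F2 F1 Gb.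
  ring.
have H : inI d (6%:R * @combo k n d a).
  rewrite h6; apply: inI_add; [apply: inI_add|].
  - by apply: inI_neg; apply: inJ_inI; eexists.
  - by apply: inI_neg; apply: inI_mull; apply: inJ_inI.
  - exact: inI_L.
have -> : @combo k n d a = ((6%:R : k)^-1)%:MP * (6%:R * @combo k n d a).
  rewrite mulrA -mpolyC_nat -rmorphM mulVf ?rmorph1 ?mul1r //.
  by rewrite ((pcharf0P k).1 chark).
exact: inI_mull.
Qed.

Unset Implicit Arguments.

Theorem mainTheorem13 (k : fieldType) (chark : [pchar k] =i pred0)
  (n : nat) (n_gt0 : (0 < n)%N) :
  (forall (d : nat -> nat) (a : option 'I_n -> {mpoly k[n]}),
     (forall j, (j < n)%N -> (0 < d j)%N) ->
     minimal_gens (@gens k n d) ->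
     is_relation (@gens k n d) a ->
     odd (\sum_(j < n) (d j - 1)) ->
     in_ideal (@gens k n d) (@combo k n d a))
  /\
  (odd n ->
   forall a : option 'I_n -> {mpoly k[n]},
     is_relation (@gens k n (fun _ => 2%N)) a ->
     in_ideal (@gens k n (fun _ => 2%N)) (\sum_(o : option 'I_n) a o)).
Proof.
split.
  by move=> d a dpos _ hrel hodd; apply: part1.
move=> hodd a hrel.
have hc : @combo k n (fun _ => 2%N) a = \sum_(o : option 'I_n) a o.
  rewrite /combo sum_option /= cc2 subnn expr0 mulr1 mulr1n mul1r addrC; congr (_ + _).
  apply: eq_bigr => i _; case: ifP => _ //.
  by rewrite expr0 mulr1 mul1r.
rewrite -hc; apply: part1 => //.
by rewrite sum_nat_const card_ord muln1.
Qed.
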